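(* Let $G$ and $H$ be finitely generated groups such that $H$ has property $\mathrm{F}_{\mathrm{Cone}}(G)$. Then there are only finitely many conjugacy classes of homomorphisms $H\to G$ (where $\varphi_1,\varphi_2$ are conjugate if there is $g\in G$ with $\varphi_2(h)=g\varphi_1(h)g^{-1}$ for all $h\in H$).
   Context: Fix a word metric $d_S$ on $G$ with respect to a finite generating set $S$. For a non-principal ultrafilter $\omega$ on $\mathbb{N}$, a sequence $\lambda_n\to\infty$ of positive reals and basepoints $\bullet_n\in G$, the asymptotic cone $\mathrm{Cone}_\omega(G,d_S,(\lambda_n),(\bullet_n))$ is the set of sequences $(x_n)$ in $G$ with $\sup_n\frac1{\lambda_n}d_S(x_n,\bullet_n)<\infty$, modulo $\lim_\omega\frac1{\lambda_n}d_S(x_n,y_n)=0$, with metric $\lim_\omega\frac1{\lambda_n}d_S(x_n,y_n)$. Given such a cone and homomorphisms $\varphi_n\colon H\to G$ such that $\sup_n\frac1{\lambda_n}d_S(\varphi_n(h)\bullet_n,\bullet_n)<\infty$ for every $h\in H$, $H$ acts isometrically on the cone by $h\cdot[x_n]=[\varphi_n(h)x_n]$. The group $H$ has property $\mathrm{F}_{\mathrm{Cone}}(G)$ if for every asymptotic cone of $G$ and every such sequence of homomorphisms, the induced action has a fixed point. *)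

(* Defs.v *)
From Stdlib Require Export Reals List.
Open Scope R_scope.
Set Implicit Arguments.

(** Groups (left-unit and left-inverse axioms suffice). *)
Record Group := {
  gcar :> Type;
  gmul : gcar -> gcar -> gcar;
  gone : gcar;
  ginv : gcar -> gcar;
  gassoc : forall x y z, gmul x (gmul y z) = gmul (gmul x y) z;
  gmul1l : forall x, gmul gone x = x;
  gmulVl : forall x, gmul (ginv x) x = gone }.

Arguments gmul {g}. Arguments gone {g}. Arguments ginv {g}.

Definition is_hom {H G : Group} (f : H -> G) : Prop :=
  forall a b : H, f (gmul a b) = gmul (f a) (f b).

Definition is_letter {G : Group} (S : list G) (x : G) : Prop :=
  In x S \/ In (ginv x) S.
Definition word_prod {G : Group} (w : list G) : G := fold_right gmul gone w.
Definition represents {G : Group} (S : list G) (w : list G) (g : G) : Prop :=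
  Forall (is_letter S) w /\ word_prod w = g.

Definition generates {G : Group} (S : list G) : Prop :=
  forall g : G, exists w, represents S w g.
Definition fin_gen (G : Group) : Prop := exists S : list G, generates S.

(** [dist_le S x y r] :  d_S(x,y) <= r  for the word metric d_S(x,y) = |x^{-1} y|_S. *)
Definition dist_le {G : Group} (S : list G) (x y : G) (r : R) : Prop :=
  exists w, represents S w (gmul (ginv x) y) /\ INR (length w) <= r.

Definition ultrafilter (U : (nat -> Prop) -> Prop) : Prop :=
  U (fun _ => True) /\ ~ U (fun _ => False) /\
  (forall A B, U A -> U B -> U (fun n => A n /\ B n)) /\
  (forall A B : nat -> Prop, (forall n, A n -> B n) -> U A -> U B) /\
  (forall A, U A \/ U (fun n => ~ A n)).
Definition nonprincipal (U : (nat -> Prop) -> Prop) : Prop :=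
  forall m : nat, ~ U (fun n => n = m).

Definition scaling (lam : nat -> R) : Prop :=
  (forall n, 0 < lam n) /\
  (forall M, exists N, forall n, (N <= n)%nat -> M <= lam n).

(** sup_n d_S(x_n, b_n)/lam_n < oo : (x_n) defines a point of the cone. *)
Definition in_cone_seq {G : Group} (S : list G) (lam : nat -> R) (b x : nat -> G) : Prop :=
  exists C : R, forall n, dist_le S (x n) (b n) (C * lam n).

(** lim_omega d_S(x_n, y_n)/lam_n = 0 : [x] = [y] in the cone. *)
Definition ulim_dist_zero {G : Group} (S : list G) (U : (nat -> Prop) -> Prop)
  (lam : nat -> R) (x y : nat -> G) : Prop :=
  forall eps, 0 < eps -> U (fun n => dist_le S (x n) (y n) (eps * lam n)).

(** Property F_Cone(G) of H, w.r.t. the word metric d_S on G: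
    every induced isometric action on every asymptotic cone has a fixed point. *)
Definition FCone {G : Group} (S : list G) (H : Group) : Prop :=
  forall (U : (nat -> Prop) -> Prop) (lam : nat -> R) (b : nat -> G)
         (phi : nat -> H -> G),
    ultrafilter U -> nonprincipal U -> scaling lam ->
    (forall n, is_hom (phi n)) ->
    (forall h : H, in_cone_seq S lam b (fun n => gmul (phi n h) (b n))) ->
    exists x : nat -> G, in_cone_seq S lam b x /\
      forall h : H, ulim_dist_zero S U lam (fun n => gmul (phi n h) (x n)) x.

Definition hom_conj {H G : Group} (phi1 phi2 : H -> G) : Prop :=
  exists g : G, forall h : H, phi2 h = gmul g (gmul (phi1 h) (ginv g)).

(* Main.v *)
Require Import Defs.
From Stdlib Require Import Lra Lia ClassicalEpsilon Classical.
From mathcomp Require Import ssreflect ssrfun ssrbool eqtype ssrnat seq.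
From mathcomp Require Import boolp classical_sets filter.
From mathcomp Require Import zify.

Arguments gassoc {g}. Arguments gmul1l {g}. Arguments gmulVl {g}.
Section GroupLemmas.
Variable G : Group.
Implicit Types x y z : G.

Lemma idem1 y : gmul y y = y -> y = gone.
Proof.
move=> yy. by rewrite -(gmul1l y) -{1}(gmulVl y) -gassoc yy gmulVl.
Qed.
Lemma mulgV x : gmul x (ginv x) = gone.
Proof. apply: idem1. by rewrite gassoc -(gassoc x (ginv x) x) gmulVl -gassoc gmul1l. Qed.
Lemma mulg1 x : gmul x gone = x.
Proof. by rewrite -(gmulVl x) gassoc mulgV gmul1l. Qed.
Lemma inv_uniq_r x y : gmul x y = gone -> y = ginv x.
Proof. move=> h. by rewrite -(gmul1l y) -(gmulVl x) -gassoc h mulg1. Qed.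
Lemma inv_uniq_l x y : gmul x y = gone -> x = ginv y.
Proof. move=> h. by rewrite -(mulg1 x) -(mulgV y) gassoc h gmul1l. Qed.
Lemma invgK x : ginv (ginv x) = x.
Proof. symmetry; apply: inv_uniq_r; exact: gmulVl. Qed.
Lemma invgM x y : ginv (gmul x y) = gmul (ginv y) (ginv x).
Proof.
symmetry; apply: inv_uniq_r.
by rewrite -gassoc (gassoc y) mulgV gmul1l mulgV.
Qed.
Lemma inv1 : ginv (@gone G) = gone.
Proof. by rewrite -{2}(gmulVl gone) mulg1. Qed.
End GroupLemmas.

Lemma hom1 (H G : Group) (f : H -> G) : is_hom f -> f gone = gone.
Proof. move=> hf; apply: idem1; by rewrite -hf gmul1l. Qed.
Lemma homV (H G : Group) (f : H -> G) x : is_hom f -> f (ginv x) = ginv (f x).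
Proof. move=> hf; apply: inv_uniq_l; by rewrite -hf gmulVl hom1. Qed.
Lemma hom_word (H G : Group) (f : H -> G) w : is_hom f ->
  f (word_prod w) = word_prod (map f w).
Proof. move=> hf; elim: w => [|a w IH] /=; first exact: hom1. by rewrite hf IH. Qed.
Section Words.
Context {G : Group} {S : list G}.

Definition Nl (g : G) (k : nat) : Prop := exists w, represents S w g /\ (length w <= k)%N.

Lemma word_cat (w1 w2 : list G) : word_prod (w1 ++ w2) = gmul (word_prod w1) (word_prod w2).
Proof. elim: w1 => [|a w IH] /=; first by rewrite gmul1l. by rewrite IH gassoc. Qed.

Lemma letter_inv x : is_letter S x -> is_letter S (ginv x).
Proof. rewrite /is_letter invgK; tauto. Qed.

Lemma Nl_mono g k k' : Nl g k -> (k <= k')%N -> Nl g k'.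
Proof. move=> [w [hw hl]] hk; exists w; split => //; lia. Qed.

Lemma Nl_mul a b k1 k2 : Nl a k1 -> Nl b k2 -> Nl (gmul a b) (k1 + k2).
Proof.
move=> [w1 [[f1 p1] l1]] [w2 [[f2 p2] l2]]; exists (w1 ++ w2); split.
  split; first by apply/Forall_app.
  by rewrite word_cat p1 p2.
rewrite length_app; lia.
Qed.

Lemma Nl_inv a k : Nl a k -> Nl (ginv a) k.
Proof.
move=> [w [[f p] l]]; exists (List.rev (List.map ginv w)); split; last first.
  by rewrite length_rev length_map.
split.
  apply/Forall_rev/Forall_map; apply: Forall_impl f; exact: letter_inv.
rewrite -p; clear; elim: w => [|x w IH] /=; first by rewrite inv1.
by rewrite word_cat IH /= mulg1 invgM.
Qed.

Lemma Nl_1 : Nl gone 0.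
Proof. exists nil; split => //; split => //. Qed.

Lemma dist_le_iff x y r : dist_le S x y r <-> exists k, Nl (gmul (ginv x) y) k /\ INR k <= r.
Proof.
split.
  move=> [w [hw hl]]; exists (length w); split => //; exists w; split => //.
move=> [k [[w [hw hl]] hk]]; exists w; split => //.
apply: Rle_trans hk; apply: le_INR; apply/leP; done.
Qed.

Lemma gen_Nl : generates S -> forall g, exists k, Nl g k.
Proof. move=> hS g; have [w hw] := hS g; exists (length w), w; split => //. Qed.

Lemma Nl_list (T : list G) : generates S -> exists m, forall t, In t T -> Nl t m.
Proof.
move=> hS; elim: T => [|a T [m IH]]; first by exists 0%N.
have [k hk] := gen_Nl hS a; exists (k + m)%N => t [<-|ht].
  apply: Nl_mono hk _; lia.
apply: Nl_mono (IH _ ht) _; lia.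
Qed.

Fixpoint words_le (Ls : list G) (n : nat) : list (list G) :=
  match n with
  | O => [:: nil]
  | n'.+1 => nil :: flat_map (fun a => map (cons a) (words_le Ls n')) Ls
  end.

Lemma words_le_spec Ls n w : Forall (fun x => In x Ls) w -> (length w <= n)%N -> In w (words_le Ls n).
Proof.
elim: n w => [|n IH] [|a w] //=; [by left| by left|].
move=> hf hl; right; apply/in_flat_map; inversion hf; subst.
exists a; split => //; apply/in_map; apply: IH => //.
Qed.

Lemma ball_list k : exists B, forall g, Nl g k -> In g B.
Proof.
exists (List.map word_prod (words_le (S ++ map ginv S) k)) => g [w [[f p] l]].
rewrite -p; apply/in_map/words_le_spec => //.
apply: Forall_impl f => x [h|h]; apply/in_or_app; [by left|right].
rewrite -(invgK _ x); exact/in_map.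
Qed.
End Words.
Arguments Nl {G} S g k.
Section Homs.
Context {H G : Group}.

Lemma hom_triv : is_hom (fun _ : H => (@gone G)).
Proof. by move=> a b; rewrite gmul1l. Qed.

Lemma fin_homs (T : list H) (B : list G) : exists L : list (H -> G),
  (forall f, In f L -> is_hom f) /\
  forall phi, is_hom phi -> (forall t, In t T -> In (phi t) B) ->
    exists f, In f L /\ forall t, In t T -> f t = phi t.
Proof.
elim: T => [|a T [L [hL hP]]].
  exists [:: fun _ => gone]; split; first by move=> f [<-|[]]; exact: hom_triv.
  by move=> phi _ _; exists (fun _ => gone); split; [left|].
pose Q (f : H -> G) (b : G) (g : H -> G) := is_hom g /\ ((forall t, In t T -> g t = f t) /\ g a = b \/
   ~ exists g', is_hom g' /\ (forall t, In t T -> g' t = f t) /\ g' a = b).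
pose pick (f : H -> G) (b : G) := epsilon (inhabits f) (Q f b).
have hQ : forall f b, is_hom f -> Q f b (pick f b).
  move=> f b hf; apply: epsilon_spec.
  case: (Classical_Prop.classic (exists g', is_hom g' /\ (forall t, In t T -> g' t = f t) /\ g' a = b)).
    move=> [g' [h1 h2]]; exists g'; split => //; by left.
  by move=> hn; exists f; split => //; right.
exists (flat_map (fun f => List.map (pick f) B) L); split.
  move=> g /in_flat_map [f [fL /in_map_iff [b [<- _]]]].
  by have [] := hQ f b (hL f fL).
move=> phi hphi hv.
have [f [fL hf]] := hP phi hphi (fun t ht => hv t (or_intror ht)).
exists (pick f (phi a)); split.
  apply/in_flat_map; exists f; split => //; apply/in_map; apply: hv; by left.
have [_ [[h1 h2]|hn]] := hQ f (phi a) (hL f fL).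
  move=> t [<-|ht] //; by rewrite h1 // hf.
exfalso; apply: hn; exists phi; split => //; split => // t ht; by rewrite hf.
Qed.

Lemma hom_ext (T : list H) (f g : H -> G) : generates T -> is_hom f -> is_hom g ->
  (forall t, In t T -> f t = g t) -> forall h, f h = g h.
Proof.
move=> hT hf hg e h; have [w [hw <-]] := hT h.
elim: hw => [|x w0 hx _ IH] /=; first by rewrite !hom1.
rewrite hf hg IH; congr gmul.
case: hx => hx; first exact: e.
by rewrite -(invgK _ x) (homV _ _ _ _ hf) (homV _ _ _ _ hg) e.
Qed.
End Homs.
Lemma exists_nonprinc_uf : exists U, ultrafilter U /\ nonprincipal U.
Proof.
have [G [UG sub]] := ultraFilterLemma (@eventually_filter).
have PF : ProperFilter G := ultra_proper.
have FF : Filter G := filter_filter.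
have HS : forall A B : nat -> Prop, (forall n, A n -> B n) -> G A -> G B.
  by move=> A B AB; apply: filterS => n; apply: AB.
exists G; split; first split.
- by apply: (HS setT) => //; exact: filterT.
split.
- move=> h; apply: (filter_not_empty G); apply: HS h => n [].
split.
- move=> A B GA GB; exact: (filterI GA GB).
split; first exact: HS.
- move=> A; have [h|h] := in_ultra_setVsetC A UG; [by left|right].
  by apply: HS h.
- move=> m Gm; have Ge : G (fun n => (m.+1 <= n)%N).
    by apply: sub; exists m.+1 => //.
  apply: (filter_not_empty G); apply: HS (filterI Gm Ge) => n [-> ]; rewrite ltnn //=.
Qed.

Lemma U_forall (U : (nat -> Prop) -> Prop) (X : Type) (A : X -> nat -> Prop) (T : list X) :
  ultrafilter U -> (forall t, In t T -> U (A t)) -> U (fun n => forall t, In t T -> A t n).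
Proof.
move=> [hT [_ [hI [hM _]]]]; elim: T => [|a T IH] h.
  by apply: hM hT => n _ t [].
have := hI _ _ (h a (or_introl erefl)) (IH (fun t ht => h t (or_intror ht))).
apply: hM => n [h1 h2] t [<-|ht] //; exact: h2.
Qed.

Lemma minimize (P : nat -> Prop) : (exists n, P n) -> exists n, P n /\ forall m, P m -> (n <= m)%N.
Proof.
move=> [n0 h0]; apply: NNPP => hno.
suff : forall n k, (k <= n)%N -> ~ P k by move=> /(_ n0 n0 (leqnn _)).
elim=> [|n IH] k hk hP.
  apply: hno; exists k; split => // m _; lia.
apply: hno; exists k; split => // m hm.
case: (leqP k m) => // hmk; exfalso; apply: (IH m) => //; lia.
Qed.

Definition conjf {H G : Group} (phi : H -> G) (g : G) : H -> G :=
  fun h => gmul (ginv g) (gmul (phi h) g).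

Lemma conj_hom {H G : Group} (phi : H -> G) g : is_hom phi -> is_hom (conjf phi g).
Proof.
move=> hp a b; rewrite /conjf hp.
by rewrite !gassoc -(gassoc _ g) mulgV mulg1 ?gassoc.
Qed.

Lemma conjf_comp {H G : Group} (phi : H -> G) g x h : conjf (conjf phi g) x h = conjf phi (gmul g x) h.
Proof. by rewrite /conjf invgM !gassoc. Qed.

Lemma Nl_hom_word {H G : Group} (S : list G) (T : list H) (phi : H -> G) m w :
  is_hom phi -> (forall t, In t T -> Nl S (phi t) m) -> Forall (is_letter T) w ->
  Nl S (phi (word_prod w)) (length w * m).
Proof.
move=> hp hm hw; elim: hw => [|x w0 hx _ IH] /=.
  rewrite hom1 //; exact: Nl_1.
rewrite hp mulSn; apply: Nl_mul IH.
case: hx => hx; first exact: hm.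
by rewrite -(invgK _ x) homV //; apply: Nl_inv; apply: hm.
Qed.

Theorem proposition5p4 (G H : Group) (S : list G) :
  generates S -> fin_gen H -> FCone S H ->
  exists L : list (H -> G),
    (forall f, In f L -> is_hom f) /\
    forall phi : H -> G, is_hom phi -> exists f, In f L /\ hom_conj f phi.
Proof.
move=> hS [T hT] hF.
apply: NNPP => hno.
have step2 : forall k, exists phi, is_hom phi /\
    forall g, ~ (forall t, In t T -> Nl S (conjf phi g t) k).
  move=> k; apply: NNPP => hk; apply: hno.
  have [B hB] := ball_list (S:=S) k.
  have [L [hL hP]] := fin_homs T B.
  exists L; split => // phi hphi.
  have [g hg] : exists g, forall t, In t T -> Nl S (conjf phi g t) k.
    apply: NNPP => hng; apply: hk; exists phi; split => // g hg; apply: hng; by exists g.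
  have [f [fL hf]] := hP (conjf phi g) (conj_hom phi g hphi) (fun t ht => hB _ (hg t ht)).
  exists f; split => //; exists g => h.
  rewrite (hom_ext _ _ _ hT (hL f fL) (conj_hom phi g hphi) hf h) /conjf.
  by rewrite !gassoc mulgV gmul1l -gassoc mulgV mulg1.
have step3 : forall k, exists p : (H -> G) * nat, is_hom p.1 /\ (k < p.2)%N /\
    (forall t, In t T -> Nl S (p.1 t) p.2) /\
    forall x m, (forall t, In t T -> Nl S (conjf p.1 x t) m) -> (p.2 <= m)%N.
  move=> k; have [phi [hphi hn]] := step2 k.
  pose P m := exists g, forall t, In t T -> Nl S (conjf phi g t) m.
  have [m0 hm0] := Nl_list (S:=S) (List.map (conjf phi gone) T) hS.
  have [m [[g hg] hmin]] : exists m, P m /\ forall m', P m' -> (m <= m')%N.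
    apply: minimize; exists m0, gone => t ht; apply: hm0; exact/in_map.
  exists (conjf phi g, m); split; first exact: conj_hom.
  split.
    case: (leqP m k) => // hmk; exfalso; apply: (hn g) => t ht.
    exact: Nl_mono (hg t ht) hmk.
  split => // x m' hx; apply: hmin; exists (gmul g x) => t ht.
  by rewrite -conjf_comp; apply: hx.
pose F := fun k => proj1_sig (constructive_indefinite_description (step3 k)).
have hFs : forall k, _ := fun k => proj2_sig (constructive_indefinite_description (step3 k)).
pose psi := fun n => (F n).1.
pose m := fun n => (F n).2.
have hpsi : forall n, is_hom (psi n) by move=> n; have [] := hFs n.
have hm : forall n, (n < m n)%N by move=> n; have [_ []] := hFs n.
have hbd : forall n t, In t T -> Nl S (psi n t) (m n) by move=> n; have [_ [_ []]] := hFs n.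
have hmin : forall n x m', (forall t, In t T -> Nl S (conjf (psi n) x t) m') -> (m n <= m')%N.
  by move=> n; have [_ [_ [_ ]]] := hFs n.
have [U [hU hnp]] := exists_nonprinc_uf.
have hpos : forall n, 0 < INR (m n).
  move=> n; apply: lt_0_INR; have := hm n; lia.
have hscal : scaling (fun n => INR (m n)).
  split => // M; have [N hN] := INR_unbounded M; exists N => n hn.
  apply: Rlt_le; apply: Rlt_le_trans hN _; apply: le_INR.
  have := hm n; lia.
have hcone : forall h, in_cone_seq S (fun n => INR (m n)) (fun _ => gone)
    (fun n => gmul (psi n h) ((fun _ => gone) n)).
  move=> h; have [w [hw <-]] := hT h; exists (INR (length w)) => n.
  apply/dist_le_iff; exists (length w * m n)%N; split; last by rewrite mult_INR; apply: Rle_refl.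
  rewrite !mulg1; apply: Nl_inv; exact: Nl_hom_word (hpsi n) (hbd n) hw.
have [x [_ hx]] := hF U _ _ psi hU hnp hscal hpsi hcone.
have hI : U (fun n => forall t, In t T ->
     dist_le S (gmul (psi n t) (x n)) (x n) (/2 * INR (m n))).
  apply: (U_forall U H (fun t n => dist_le S (gmul (psi n t) (x n)) (x n) (/2 * INR (m n))) T hU) => t _; apply: hx; lra.
have [_ [hnF [_ [hM _]]]] := hU.
apply: hnF; apply: hM hI => n hn.
have hmn := hm n.
have : (m n <= (m n).-1)%N.
  apply: (hmin n (x n)) => t ht.
  have [k [hk hkr]] := (dist_le_iff _ _ _).1 (hn t ht).
  have hlt : (k < m n)%N.
    have := hpos n => hp.
    have : INR k < INR (m n) by lra.
    move/INR_lt; lia.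
  apply: Nl_mono (_ : Nl S _ k) _; last by lia.
  rewrite /conjf -(invgK _ (gmul (ginv (x n)) _)); apply: Nl_inv.
  by rewrite invgM invgK.
lia.
Qed.
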